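(* Let $Q=[u_1,\dots,u_n]\subset\mathbb{S}^2$ be a spherical polygon and let $u_iu_{i+1}$ and $u_ju_{j+1}$ be two edges with $j\neq i+1$ and $i\neq j+1$. Then $Q$ has an antipodal intersection at these edges if and only if $$\operatorname{sign}[u_i,u_{i+1},u_j]=\operatorname{sign}[u_i,u_j,u_{j+1}]=-\operatorname{sign}[u_i,u_{i+1},u_{j+1}]=-\operatorname{sign}[u_{i+1},u_j,u_{j+1}].$$ Moreover this happens if and only if the set $\{u_i,u_{i+1},u_j,u_{j+1}\}$ is not contained in any closed hemisphere.
   Context: A spherical polygon has edges the minimal great-circle arcs between consecutive vertices (indices mod $n$). Standing assumption: no three vertices of $Q$ are linearly dependent. $[a,b,c]$ denotes the determinant of $a,b,c\in\mathbb{R}^3$. An antipodal intersection at edges $e,f$ means that $e$ intersects the antipodal arc $-f$. *)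

(* Defs.v *)
From HB Require Import structures.
From mathcomp Require Import all_boot all_order all_algebra.
From mathcomp Require Import reals.
Set Implicit Arguments. Unset Strict Implicit. Unset Printing Implicit Defensive.
Import Order.TTheory GRing.Theory Num.Theory.
Local Open Scope ring_scope.

Section Sphere.
Variable R : realType.
Notation vec := 'rV[R]_3.

Definition dot (x y : vec) : R := \sum_(k < 3) x 0 k * y 0 k.

Definition on_sphere (x : vec) : Prop := dot x x = 1.

Definition mat3 (a b c : vec) : 'M[R]_3 := col_mx a (col_mx b c).

Definition det3 (a b c : vec) : R := \det (mat3 a b c).

Definition lin_dep3 (a b c : vec) : Prop := ~~ row_free (mat3 a b c).

(* Minimal great-circle arc between two non-antipodal points a, b of S^2
   (as a closed set of points):  the points of S^2 in the cone spanned by a, b. *)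
Definition arc (a b : vec) : vec -> Prop :=
  fun x => on_sphere x /\ exists s t : R, 0 <= s /\ 0 <= t /\ x = s *: a + t *: b.

(* The antipodal arc -f of the arc f = ab is the arc from -a to -b. *)
Definition antipodal_intersection (a b c d : vec) : Prop :=
  exists x, arc a b x /\ arc (- c) (- d) x.

(* Closed hemisphere with pole v (v nonzero). *)
Definition in_closed_hemisphere (v x : vec) : Prop := 0 <= dot v x.

Definition spherical_polygon (n : nat) (u : 'I_n -> vec) : Prop :=
  (forall i, on_sphere (u i)) /\
  (forall a b c : 'I_n, a != b -> b != c -> a != c -> ~ lin_dep3 (u a) (u b) (u c)).

End Sphere.

(* Main.v *)
Require Import Defs.
From HB Require Import structures.
From mathcomp Require Import all_boot all_order all_algebra.
From mathcomp Require Import reals ring lra zify.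
Import Order.TTheory GRing.Theory Num.Theory.
Local Open Scope ring_scope.

Section S.
Variable R : realType.
Notation vec := 'rV[R]_3.

Lemma colE k (a : vec) (M : 'M[R]_(k.+1,3)) (i : 'I_(1 + k.+1)) j :
  col_mx a M i j = if val i == 0%N then a 0 (inord (val j)) else M (inord (val i).-1) (inord (val j)).
Proof.
case: i => [[|i] Hi] /=.
  have -> : Ordinal Hi = lshift k.+1 (0 : 'I_1) by apply: val_inj.
  by rewrite col_mxEu inord_val.
have -> : Ordinal Hi = rshift 1 (inord i : 'I_k.+1).
  by apply: val_inj; rewrite /= inordK.
by rewrite col_mxEd inord_val.
Qed.

Lemma colE' k (a : vec) (M : 'M[R]_(k.+1,3)) (i : 'I_(1 + k.+1)) j :
  (match split i with inl i1 => a i1 j | inr i2 => M i2 j end) =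
  if val i == 0%N then a 0 (inord (val j)) else M (inord (val i).-1) (inord (val j)).
Proof. by rewrite -colE mxE. Qed.

Lemma rvE (a : vec) (i : 'I_1) j : a i j = a 0 (inord (val j)).
Proof. by rewrite ord1 inord_val. Qed.

Definition e (a : vec) k := a 0 (inord k).

Lemma mat3_eq (a b c : vec) : mat3 a b c =
  \matrix_(i < 3, j < 3) nth 0 (nth [::] [:: [:: e a 0; e a 1; e a 2];
     [:: e b 0; e b 1; e b 2]; [:: e c 0; e c 1; e c 2]] i) j.
Proof.
apply/matrixP => i j; rewrite [RHS]mxE /mat3 colE.
case: i => [[|[|[|i]]] Hi] //=; rewrite ?colE /=. all: try (case: j => [[|[|[|j]]] Hj] //=).
all: rewrite ?inordK //= /e; congr (_ _ _); apply: val_inj; rewrite /= ?inordK //.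
Qed.

Lemma det3E (a b c : vec) : det3 a b c =
  e a 0 * (e b 1 * e c 2 - e b 2 * e c 1)
  - e a 1 * (e b 0 * e c 2 - e b 2 * e c 0)
  + e a 2 * (e b 0 * e c 1 - e b 1 * e c 0).
Proof.
rewrite /det3 mat3_eq (expand_det_row _ 0) !big_ord_recl big_ord0 /cofactor.
rewrite !(expand_det_row _ 0) !big_ord_recl !big_ord0 /cofactor !det_mx11.
rewrite !mxE /= /bump /= !add0n; ring.
Qed.

Lemma eE (a : vec) (j : 'I_3) : a 0 j = e a j.
Proof. by rewrite /e inord_val. Qed.

Lemma vec_eq (x y : vec) : e x 0 = e y 0 -> e x 1 = e y 1 -> e x 2 = e y 2 -> x = y.
Proof.
move=> h0 h1 h2; apply/rowP => j; rewrite !eE.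
by case: j => [[|[|[|j]]] Hj] //=.
Qed.

Lemma eD (x y : vec) k : e (x + y) k = e x k + e y k. Proof. by rewrite /e mxE. Qed.
Lemma eZ (s : R) (x : vec) k : e (s *: x) k = s * e x k. Proof. by rewrite /e mxE. Qed.
Lemma eN (x : vec) k : e (- x) k = - e x k. Proof. by rewrite /e mxE. Qed.
Lemma e0 k : e (0 : vec) k = 0. Proof. by rewrite /e mxE. Qed.

Lemma dotE (x y : vec) : dot x y = e x 0 * e y 0 + e x 1 * e y 1 + e x 2 * e y 2.
Proof. rewrite /dot !big_ord_recl big_ord0 !eE /= /bump /= addr0 !addrA //. Qed.

Definition mk (x y z : R) : vec := \row_(k < 3) nth 0 [:: x; y; z] k.
Lemma e_mk x y z : [/\ e (mk x y z) 0 = x, e (mk x y z) 1 = y & e (mk x y z) 2 = z].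
Proof. by rewrite /e !mxE !inordK. Qed.

Definition cross (a b : vec) := mk (e a 1 * e b 2 - e a 2 * e b 1)
  (e a 2 * e b 0 - e a 0 * e b 2) (e a 0 * e b 1 - e a 1 * e b 0).

Lemma dot_cross (a b x : vec) : dot (cross a b) x = det3 a b x.
Proof. have [h0 h1 h2] := e_mk (e a 1 * e b 2 - e a 2 * e b 1)
  (e a 2 * e b 0 - e a 0 * e b 2) (e a 0 * e b 1 - e a 1 * e b 0).
rewrite dotE det3E /cross h0 h1 h2; ring. Qed.

Lemma dotZ k (v x : vec) : dot (k *: v) x = k * dot v x.
Proof. rewrite !dotE !eZ; ring. Qed.

Lemma dot0 (x : vec) : dot 0 x = 0.
Proof. rewrite !dotE !e0; ring. Qed.

Lemma det3_comb (u v a b c d : vec) s t p q : det3 u v (s*:a + t*:b + p*:c + q*:d) =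
  s * det3 u v a + t*det3 u v b + p * det3 u v c + q * det3 u v d.
Proof. rewrite !det3E !eD !eZ; ring. Qed.

Lemma det3_0 (u v : vec) : det3 u v 0 = 0.
Proof. rewrite !det3E !e0; ring. Qed.

Lemma comb_eq (u v a b c d : vec) s t p q : s*:a + t*:b + p*:c + q*:d = 0 ->
  s * det3 u v a + t*det3 u v b + p * det3 u v c + q * det3 u v d = 0.
Proof. by move=> h; rewrite -det3_comb h det3_0. Qed.
Arguments comb_eq u v {a b c d s t p q}.

Lemma hemi_of_pair (u w y z : vec) : 0 < det3 u w y * det3 u w z ->
  exists v : vec, v != 0 /\ 0 <= dot v u /\ 0 <= dot v w /\ 0 <= dot v y /\ 0 <= dot v z.
Proof.
move=> hp; exists (det3 u w y *: cross u w).
rewrite !dotZ !dot_cross.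
have -> : det3 u w u = 0 by rewrite det3E; ring.
have -> : det3 u w w = 0 by rewrite det3E; ring.
split; last by rewrite !mulr0 lexx; nra.
apply/eqP => hv.
have : dot (det3 u w y *: cross u w) y = 0 by rewrite hv dot0.
rewrite dotZ dot_cross => h; nra.
Qed.


Definition signs (D1 D2 D3 D4 : R) :=
  Num.sg D1 = Num.sg D2 /\ Num.sg D2 = - Num.sg D3 /\ - Num.sg D3 = - Num.sg D4.

Definition pos3 (D1 D2 D3 D4 : R) := 0 < - D4 * D1 /\ 0 < D2 * D1 /\ 0 < - D3 * D1.

Lemma sg_char (D1 D2 D3 D4 : R) : D1 != 0 -> D2 != 0 -> D3 != 0 -> D4 != 0 ->
  signs D1 D2 D3 D4 <-> pos3 D1 D2 D3 D4.
Proof.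
move=> n1 n2 n3 n4; rewrite /signs /pos3.
have [h1|h1|h1] := ltrgt0P D1; last by rewrite h1 eqxx in n1.
all: have [h2|h2|h2] := ltrgt0P D2; last (by rewrite h2 eqxx in n2).
all: have [h3|h3|h3] := ltrgt0P D3; last (by rewrite h3 eqxx in n3).
all: have [h4|h4|h4] := ltrgt0P D4; last (by rewrite h4 eqxx in n4).
all: rewrite ?(gtr0_sg h1) ?(ltr0_sg h1) ?(gtr0_sg h2) ?(ltr0_sg h2)
  ?(gtr0_sg h3) ?(ltr0_sg h3) ?(gtr0_sg h4) ?(ltr0_sg h4).
all: split; [move=> [E1 [E2 E3]] | move=> [P1 [P2 P3]]].
all: try (exfalso; lra).
all: try (exfalso; nra).
all: try (split; [nra | split; nra]).
all: try (split; [lra | split; lra]).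
Qed.

Lemma pos3_alt (D1 D2 D3 D4 : R) : D1 != 0 -> D2 != 0 -> D3 != 0 -> D4 != 0 ->
  ~ pos3 D1 D2 D3 D4 -> 0 < D1 * D3 \/ 0 < - D1 * D2 \/ 0 < D1 * D4.
Proof.
move=> n1 n2 n3 n4 hn.
have m12 : D1 * D2 != 0 by rewrite mulf_neq0.
have m13 : D1 * D3 != 0 by rewrite mulf_neq0.
have m14 : D1 * D4 != 0 by rewrite mulf_neq0.
have [h12|h12|h12] := ltrgt0P (D1 * D2); last by rewrite h12 eqxx in m12.
- have [h13|h13|h13] := ltrgt0P (D1 * D3); last by rewrite h13 eqxx in m13.
  + by left.
  have [h14|h14|h14] := ltrgt0P (D1 * D4); last by rewrite h14 eqxx in m14.
  + by right; right.
  exfalso; apply: hn; rewrite /pos3; nra.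
- by right; left; nra.
Qed.

Arguments pos3_alt {D1 D2 D3 D4}.
Arguments hemi_of_pair {u w y z}.

Lemma eqz (x y z w : R) : x * y = z * w -> x != 0 -> y != 0 -> w != 0 -> z != 0.
Proof.
move=> h nx ny nw; apply/eqP => z0; move: h; rewrite z0 mul0r => /eqP.
by rewrite mulf_eq0 (negbTE nx) (negbTE ny).
Qed.
Arguments eqz {x y z w}.

Lemma pos_of (q X Y s : R) : 0 < q -> 0 < s -> Y != 0 -> q * X = s * (Y*Y) -> 0 < X.
Proof.
move=> hq hs hY h; rewrite -(pmulr_rgt0 _ hq) h; apply: mulr_gt0 => //.
by rewrite lt0r mulf_neq0 //= -expr2 sqr_ge0.
Qed.
Arguments pos_of {q X Y s}.

Lemma det3_cyc (u v w : vec) : det3 v w u = det3 u v w.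
Proof. rewrite !det3E; ring. Qed.
Lemma det3_sw (u v w : vec) : det3 v u w = - det3 u v w.
Proof. rewrite !det3E; ring. Qed.
Lemma det3_sw23 (u v w : vec) : det3 u w v = - det3 u v w.
Proof. rewrite !det3E; ring. Qed.
Lemma det3_u (u v : vec) : det3 u v u = 0.
Proof. rewrite !det3E; ring. Qed.
Lemma det3_v (u v : vec) : det3 u v v = 0.
Proof. rewrite !det3E; ring. Qed.

Lemma dotZr k (v x : vec) : dot v (k *: x) = k * dot v x.
Proof. rewrite !dotE !eZ; ring. Qed.

Lemma antip_char (a b c d : vec) :
  det3 a b c != 0 -> det3 a c d != 0 -> det3 a b d != 0 -> det3 b c d != 0 ->
  (antipodal_intersection a b c d <->
   pos3 (det3 a b c) (det3 a c d) (det3 a b d) (det3 b c d)).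
Proof.
move=> n1 n2 n3 n4; split.
- case=> x [[hx [s [t [hs [ht ex]]]]] [_ [p [q [hp [hq ex']]]]]].
  have hw : s*:a + t*:b + p*:c + q*:d = 0.
    apply: vec_eq; rewrite !eD !eZ e0.
    + have := congr1 (e^~ 0%N) ex; have := congr1 (e^~ 0%N) ex'.
      rewrite /= !eD !eZ !eN; lra.
    + have := congr1 (e^~ 1%N) ex; have := congr1 (e^~ 1%N) ex'.
      rewrite /= !eD !eZ !eN; lra.
    + have := congr1 (e^~ 2%N) ex; have := congr1 (e^~ 2%N) ex'.
      rewrite /= !eD !eZ !eN; lra.
  set D1 := det3 a b c in n1 *; set D2 := det3 a c d in n2 *;
  set D3 := det3 a b d in n3 *; set D4 := det3 b c d in n4 *.
  have Q1 : p * D1 = (- q) * D3.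
    have := comb_eq a b hw; rewrite det3_u det3_v -/D1 -/D3; lra.
  have Q2 : s * D2 = (- t) * D4.
    have := comb_eq c d hw; rewrite det3_u det3_v (det3_cyc a c d) (det3_cyc b c d) -/D2 -/D4; lra.
  have Q3 : t * D1 = q * D2.
    have := comb_eq a c hw; rewrite det3_u det3_v (det3_sw23 a b c) -/D1 -/D2; lra.
  have Q4 : s * D3 = p * D4.
    have := comb_eq b d hw; rewrite det3_u det3_v (det3_cyc a b d) (det3_sw23 b c d) -/D3 -/D4; lra.
  have Q5 : t * D3 = (- p) * D2.
    have := comb_eq a d hw; rewrite det3_u det3_v (det3_sw23 a b d) (det3_sw23 a c d) -/D3 -/D2; lra.
  have Q6 : s * D1 = (- q) * D4.
    have := comb_eq b c hw; rewrite det3_u det3_v (det3_cyc a b c) -/D1 -/D4; lra.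
  clearbody D1 D2 D3 D4.
  have st : s != 0 \/ t != 0.
    case: (boolP (s == 0)) => [/eqP s0|]; last by left.
    case: (boolP (t == 0)) => [/eqP t0|]; last by right.
    move: hx; rewrite /on_sphere ex s0 t0 !scale0r addr0 dot0 => h.
    by exfalso; move: (@ltr01 R); rewrite h ltxx.
  have spos : 0 < s.
    rewrite lt_neqAle hs andbT eq_sym; apply/negP => /eqP s0.
    have t0 : t != 0 by case: st => //; rewrite s0 eqxx.
    have p0 : - p != 0 := eqz Q5 t0 n3 n2.
    have p0' : p != 0 by rewrite -oppr_eq0.
    have := eqz (esym Q4) p0' n4 n3; by rewrite s0 eqxx.
  have tpos : 0 < t.
    rewrite lt_neqAle ht andbT eq_sym; apply/negP => /eqP t0.
    have s0 : s != 0 by rewrite gt_eqF.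
    have q0 : - q != 0 := eqz Q6 s0 n1 n4.
    have q0' : q != 0 by rewrite -oppr_eq0.
    have := eqz (esym Q3) q0' n2 n1; by rewrite t0 eqxx.
  have ppos : 0 < p.
    rewrite lt_neqAle hp andbT eq_sym; exact: (eqz Q4 (lt0r_neq0 spos) n3 n4).
  have qpos : 0 < q.
    rewrite lt_neqAle hq andbT eq_sym; exact: (eqz Q3 (lt0r_neq0 tpos) n1 n2).
  rewrite /pos3; split; [|split].
  + apply: (pos_of qpos spos n1); transitivity (D1 * (- q * D4)); [ring | rewrite -Q6; ring].
  + apply: (pos_of qpos tpos n1); transitivity (D1 * (q * D2)); [ring | rewrite -Q3; ring].
  + apply: (pos_of qpos ppos n1); transitivity (D1 * (- q * D3)); [ring | rewrite -Q1; ring].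
- move=> [P1 [P2 P3]].
  set s : R := - det3 b c d * det3 a b c in P1 *.
  set t : R := det3 a c d * det3 a b c in P2 *.
  set p : R := - det3 a b d * det3 a b c in P3 *.
  set q : R := det3 a b c * det3 a b c.
  have hw : forall k, (k < 3)%N -> s * e a k + t * e b k + p * e c k + q * e d k = 0.
    by move=> [|[|[|k]]] // _; rewrite /s /t /p /q !det3E; ring.
  set y : vec := s *: a + t *: b.
  have hyb : det3 y b c = s * det3 a b c.
    rewrite /y !det3E !eD !eZ; ring.
  have hyy : 0 < dot y y.
    rewrite ltNge; apply/negP => hle.
    have sq : forall k, (k < 3)%N -> e y k = 0.
      move=> k hk; have : (e y k) ^+ 2 <= 0.
        move: hle; rewrite dotE => hle.
        have := sqr_ge0 (e y 0); have := sqr_ge0 (e y 1); have := sqr_ge0 (e y 2).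
        by case: k hk => [|[|[|k]]] // _; rewrite ?expr2; lra.
      move=> h; apply/eqP; rewrite -sqrf_eq0 eq_le h sqr_ge0 //.
    move: hyb; rewrite det3E !sq // => h.
    have : s * det3 a b c = 0 by rewrite -h; ring.
    by apply/eqP; rewrite mulf_neq0 // /s mulf_neq0 // oppr_eq0.
  set N : R := Num.sqrt (dot y y).
  have hN : 0 < N by rewrite sqrtr_gt0.
  have hN2 : N * N = dot y y by rewrite -expr2 sqr_sqrtr // ltW.
  have hsp : on_sphere (N^-1 *: y).
    rewrite /on_sphere dotZ dotZr -hN2; field; exact: lt0r_neq0.
  have hNi : 0 <= N^-1 by rewrite invr_ge0 ltW.
  have q0 : 0 <= q by rewrite /q -expr2 sqr_ge0.
  have ey : y = s *: a + t *: b by [].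
  clearbody N y s t p q.
  exists (N^-1 *: y); split; split => //.
  + exists (N^-1 * s), (N^-1 * t); split; first by apply: mulr_ge0 => //; exact: ltW P1.
    split; first by apply: mulr_ge0 => //; exact: ltW P2.
    by rewrite ey scalerDr !scalerA.
  + exists (N^-1 * p), (N^-1 * q); split; first by apply: mulr_ge0 => //; exact: ltW P3.
    split; first by apply: mulr_ge0.
    apply: vec_eq; rewrite ey !eD !eZ !eN eD !eZ.
    * rewrite -!mulrA -mulrDr; congr (_ * _); apply/eqP; rewrite -subr_eq0; apply/eqP; rewrite -(hw 0%N isT); ring.
    * rewrite -!mulrA -mulrDr; congr (_ * _); apply/eqP; rewrite -subr_eq0; apply/eqP; rewrite -(hw 1%N isT); ring.
    * rewrite -!mulrA -mulrDr; congr (_ * _); apply/eqP; rewrite -subr_eq0; apply/eqP; rewrite -(hw 2%N isT); ring.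
Qed.

Lemma e_mk0 x y z : e (mk x y z) 0 = x. Proof. by case: (e_mk x y z). Qed.
Lemma e_mk1 x y z : e (mk x y z) 1 = y. Proof. by case: (e_mk x y z). Qed.
Lemma e_mk2 x y z : e (mk x y z) 2 = z. Proof. by case: (e_mk x y z). Qed.

Lemma recon (a b c v : vec) k : (k < 3)%N ->
  det3 a b c * e v k = dot v a * e (cross b c) k + dot v b * e (cross c a) k
    + dot v c * e (cross a b) k.
Proof.
case: k => [|[|[|k]]] // _; rewrite /cross ?e_mk0 ?e_mk1 ?e_mk2 !dotE !det3E; ring.
Qed.

Lemma hemi_char (a b c d : vec) :
  det3 a b c != 0 -> det3 a c d != 0 -> det3 a b d != 0 -> det3 b c d != 0 ->
  (pos3 (det3 a b c) (det3 a c d) (det3 a b d) (det3 b c d) <->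
   ~ (exists v : vec, v != 0 /\ 0 <= dot v a /\ 0 <= dot v b /\ 0 <= dot v c /\ 0 <= dot v d)).
Proof.
move=> n1 n2 n3 n4; split.
- move=> [P1 [P2 P3]] [v [nv [ha [hb [hc hd]]]]].
  have P4 : 0 < det3 a b c * det3 a b c by rewrite lt0r mulf_neq0 //= -expr2 sqr_ge0.
  set s : R := - det3 b c d * det3 a b c in P1 *.
  set t : R := det3 a c d * det3 a b c in P2 *.
  set p : R := - det3 a b d * det3 a b c in P3 *.
  set q : R := det3 a b c * det3 a b c in P4 *.
  have hw : forall k, (k < 3)%N -> s * e a k + t * e b k + p * e c k + q * e d k = 0.
    by move=> [|[|[|k]]] // _; rewrite /s /t /p /q !det3E; ring.
  clearbody s t p q.
  have hz : s * dot v a + t * dot v b + p * dot v c + q * dot v d = 0.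
    have -> : s * dot v a + t * dot v b + p * dot v c + q * dot v d =
      e v 0 * (s * e a 0 + t * e b 0 + p * e c 0 + q * e d 0) +
      e v 1 * (s * e a 1 + t * e b 1 + p * e c 1 + q * e d 1) +
      e v 2 * (s * e a 2 + t * e b 2 + p * e c 2 + q * e d 2) by rewrite !dotE; ring.
    rewrite !hw //; ring.
  have m1 := mulr_ge0 (ltW P1) ha.
  have m2 := mulr_ge0 (ltW P2) hb.
  have m3 := mulr_ge0 (ltW P3) hc.
  have m4 := mulr_ge0 (ltW P4) hd.
  have za : dot v a = 0.
    have : s * dot v a = 0 by lra.
    by move/eqP; rewrite mulf_eq0 (negbTE (lt0r_neq0 P1)) => /eqP.
  have zb : dot v b = 0.
    have : t * dot v b = 0 by lra.
    by move/eqP; rewrite mulf_eq0 (negbTE (lt0r_neq0 P2)) => /eqP.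
  have zc : dot v c = 0.
    have : p * dot v c = 0 by lra.
    by move/eqP; rewrite mulf_eq0 (negbTE (lt0r_neq0 P3)) => /eqP.
  have zk : forall k, (k < 3)%N -> e v k = 0.
    move=> k hk; have := recon a b c v k hk; rewrite za zb zc !mul0r !addr0 => /eqP.
    by rewrite mulf_eq0 (negbTE n1) => /eqP.
  move/negP: nv; apply; apply/eqP; apply: vec_eq; rewrite e0; exact: zk.
- move=> hn.
  case: (boolP [&& 0 < - det3 b c d * det3 a b c, 0 < det3 a c d * det3 a b c &
      0 < - det3 a b d * det3 a b c]) => [/and3P [h1 h2 h3] | hb].
    by split => //; split.
  exfalso.
  have np : ~ pos3 (det3 a b c) (det3 a c d) (det3 a b d) (det3 b c d).
    by move=> [h1 [h2 h3]]; move/negP: hb; apply; rewrite h1 h2 h3.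
  case: (pos3_alt n1 n2 n3 n4 np) => [h|[h|h]]; apply: hn.
  + exact: hemi_of_pair h.
  + have h' : 0 < det3 a c b * det3 a c d by rewrite det3_sw23.
    have [v [nv [h1 [h2 [h3 h4]]]]] := hemi_of_pair h'.
    by exists v; do !split.
  + have h' : 0 < det3 b c a * det3 b c d by rewrite det3_cyc.
    have [v [nv [h1 [h2 [h3 h4]]]]] := hemi_of_pair h'.
    by exists v; do !split.
Qed.

Lemma det_nz (a b c : vec) : ~ lin_dep3 a b c -> det3 a b c != 0.
Proof.
rewrite /lin_dep3 => h; have : row_free (mat3 a b c) by apply/negPn/negP.
by rewrite row_free_unit unitmxE unitfE.
Qed.

End S.

Lemma ordS_neq n (i j : 'I_n) : i != j -> ordS i != i.
Proof.
move=> hij; apply/negP => /eqP h.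
have h' : (i.+1 %% n = i)%N by move: (congr1 val h).
move/negP: hij; apply; apply/eqP/val_inj => /=.
have := ltn_ord i; have := ltn_ord j; move: h'.
move: (nat_of_ord i) (nat_of_ord j) => x y hx hy hx'.
case: (ltnP x.+1 n) => hlt.
  by move: hx; rewrite modn_small //; lia.
have e : n = x.+1 by lia.
by move: hx; rewrite e modnn; lia.
Qed.

Arguments ordS_neq {n i j}.
Arguments det_nz {R a b c}.
Arguments antip_char {R a b c d}.
Arguments hemi_char {R a b c d}.
Arguments sg_char {R D1 D2 D3 D4}.

Theorem proposition3 (R : realType) (n : nat) (u : 'I_n -> 'rV[R]_3)
    (i j : 'I_n) :
  spherical_polygon u ->
  i != j -> j != ordS i -> i != ordS j ->
  (antipodal_intersection (u i) (u (ordS i)) (u j) (u (ordS j)) <->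
   (Num.sg (det3 (u i) (u (ordS i)) (u j)) = Num.sg (det3 (u i) (u j) (u (ordS j))) /\
    Num.sg (det3 (u i) (u j) (u (ordS j))) = - Num.sg (det3 (u i) (u (ordS i)) (u (ordS j))) /\
    - Num.sg (det3 (u i) (u (ordS i)) (u (ordS j))) = - Num.sg (det3 (u (ordS i)) (u j) (u (ordS j))))) /\
  (antipodal_intersection (u i) (u (ordS i)) (u j) (u (ordS j)) <->
   ~ (exists v : 'rV[R]_3, v != 0 /\
        in_closed_hemisphere v (u i) /\ in_closed_hemisphere v (u (ordS i)) /\
        in_closed_hemisphere v (u j) /\ in_closed_hemisphere v (u (ordS j)))).
Proof.
move=> [hsph hnd] hij hj hi.
have d12 : i != ordS i by rewrite eq_sym (ordS_neq hij).
have d34 : j != ordS j by rewrite eq_sym; apply: (@ordS_neq _ j i); rewrite eq_sym.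
have d24 : ordS i != ordS j.
  by apply/negP => /eqP /ordS_inj /eqP; apply/negP.
have d23 : ordS i != j by rewrite eq_sym.
have n1 := det_nz (hnd _ _ _ d12 d23 hij).
have n2 := det_nz (hnd _ _ _ hij d34 hi).
have n3 := det_nz (hnd _ _ _ d12 d24 hi).
have n4 := det_nz (hnd _ _ _ d23 d34 d24).
split.
- apply: iff_trans (antip_char n1 n2 n3 n4) _.
  apply: iff_sym; exact: sg_char.
- apply: iff_trans (antip_char n1 n2 n3 n4) _.
  exact: hemi_char.
Qed.
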